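(* Let $n=2^k$ for some integer $k\ge1$. Let $V=\{v\in\{-1,1\}^n : v_1=1\}$, $P(V)=\{\sum_{v\in W}v : W\subseteq V\}$, $g(V)=\frac12\sum_{v\in V}v$, $\mathbf{1}=(1,\dots,1)\in\mathbb{R}^n$, $M=2^{n-2}-\frac12\binom{n-1}{n/2}+\frac12$, and $K_M=\{(x_1,\dots,x_n)\in\mathbb{R}^n : x_i\le M\ \forall i\}$. Then there exists $w\in\mathbb{Z}^n$ with $w_i\le 1$ for all $i$ such that \[0\in P(V)-g(V)-\tfrac12\binom{n-1}{n/2}\mathbf{1}+\tfrac12 w\subset K_M.\] *)

(* Defs.v *)
From mathcomp Require Import all_boot all_order all_algebra.
Unset Printing Implicit Defensive.
Import Order.TTheory GRing.Theory Num.Theory.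
Local Open Scope ring_scope.

Definition signvec (R : nzRingType) (n : nat) (s : {ffun 'I_n -> bool}) : 'rV[R]_n :=
  \row_i (if s i then 1 else -1).

(* V = { v in {-1,1}^n : v_1 = 1 } (first coordinate = index 0). *)
Definition Vset (n : nat) : {set {ffun 'I_n -> bool}} :=
  [set s : {ffun 'I_n -> bool} | [forall i : 'I_n, (val i == 0)%N ==> s i]].

Definition PV (R : nzRingType) (n : nat) (x : 'rV[R]_n) : Prop :=
  exists W : {set {ffun 'I_n -> bool}},
    W \subset Vset n /\ x = \sum_(s in W) signvec R n s.

Definition gV (R : fieldType) (n : nat) : 'rV[R]_n :=
  2^-1 *: \sum_(s in Vset n) signvec R n s.

Definition ones (R : nzRingType) (n : nat) : 'rV[R]_n := \row_i 1.

Definition Mbound (R : fieldType) (n : nat) : R :=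
  (2 ^ (n - 2))%N%:R - 2^-1 * ('C(n.-1, n %/ 2))%:R + 2^-1.

Definition shiftedPV (R : fieldType) (n : nat) (w : 'I_n -> int) (y : 'rV[R]_n) : Prop :=
  exists x : 'rV[R]_n, PV R n x /\
    y = x - gV R n - (2^-1 * ('C(n.-1, n %/ 2))%:R) *: ones R n
        + 2^-1 *: (\row_i ((w i)%:~R : R)).

Definition KM (R : realFieldType) (n : nat) (M : R) (y : 'rV[R]_n) : Prop :=
  forall i : 'I_n, y ord0 i <= M.

(* Main.v *)
Require Import Defs.
From mathcomp Require Import all_boot all_order all_algebra.
From mathcomp Require Import zify ring lra.
Import Order.TTheory GRing.Theory Num.Theory.
Set Implicit Arguments. Unset Strict Implicit. Unset Printing Implicit Defensive.

Lemma card_inv (T : finType) (f : T -> T) (P : pred T) : involutive f ->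
  #|[set x | P (f x)]| = #|[set x | P x]|.
Proof.
move=> fK; rewrite -(card_preimset [set x | P x] (inv_inj fK)); apply: eq_card => x.
by rewrite !inE.
Qed.

Section Comb.
Variable m : nat.
Local Notation N := (m.*2.+1).
Local Notation S := {set 'I_N}.

Definition inF (F : {set S}) (j : 'I_N) := #|[set A in F | j \in A]|.
Definition outF (F : {set S}) (j : 'I_N) := #|[set A in F | j \notin A]|.

Lemma in_out_all j : inF setT j = outF setT j.
Proof.
rewrite /inF /outF -(card_inv (fun A : S => (A \in setT) && (j \in A)) (@setCK _)).
by apply: eq_card => A; rewrite !inE.
Qed.

Lemma in_out F j : inF F j + outF F j = #|F|.
Proof.
rewrite /inF /outF -(cardsID [set A : S | j \in A] F); congr (_ + _); apply: eq_card => A;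
by rewrite !inE // andbC.
Qed.

Lemma card_sets : #|[set: S]| = 2 ^ N.
Proof. by rewrite -powersetT card_powerset cardsT card_ord. Qed.

Definition B0 : {set S} := [set A : S | #|A| <= m].
Definition D : {set S} := [set A : S | #|A| == m.+1].

Lemma card_B0 : (#|B0|).*2 = 2 ^ N.
Proof.
rewrite -card_sets cardsT -(cardsC B0) -addnn; congr (_ + _).
have -> : #|~: B0| = #|[set A : S | ~~ (A \in B0)]| by apply: eq_card => A; rewrite !inE.
rewrite -(card_inv (fun A : S => ~~ (A \in B0)) (@setCK _)).
apply: eq_card => A; rewrite !inE.
have := cardsC A; have := max_card A; rewrite card_ord; lia.
Qed.

Lemma card_D : #|D| = 'C(N, m.+1).
Proof. by rewrite /D card_draws card_ord. Qed.

Definition flip (j : 'I_N) (A : S) : S := if j \in A then A :\ j else j |: A.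

Lemma flipK j : involutive (flip j).
Proof.
move=> A; rewrite {2}/flip; case: ifP => jA.
  by rewrite /flip setD11 setD1K.
by rewrite /flip setU11 setU1K ?jA.
Qed.

Lemma flip_in j A : (j \in flip j A) = (j \notin A).
Proof. by rewrite /flip; case: ifP => jA; rewrite !inE eqxx. Qed.

Lemma flip_card j A : #|flip j A| = if j \in A then #|A| - 1 else #|A|.+1.
Proof.
rewrite /flip; case: ifP => jA.
  by rewrite (cardsD1 j A) jA add1n subn1.
by rewrite cardsU1 jA add1n.
Qed.

Lemma outB0 j : outF B0 j = inF B0 j + inF D j.
Proof.
rewrite /outF -(cardsID [set A : S | #|A| < m]); congr (_ + _).
  rewrite /inF -(card_inv (fun A : S => (A \in B0) && (j \in A)) (flipK j)).
  apply: eq_card => A; rewrite !inE flip_in flip_card.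
  case: (boolP (j \in A)) => jA /=; rewrite ?andbF ?andbT //.
  lia.
rewrite /inF -(card_inv (fun A : S => (A \in D) && (j \in A)) (flipK j)).
apply: eq_card => A; rewrite !inE flip_in flip_card.
case: (boolP (j \in A)) => jA /=; rewrite ?andbF ?andbT //.
lia.
Qed.


Definition r (A : S) : S := @ordS N @: A.

Lemma r_inj : injective r.
Proof. exact: imset_inj (@ordS_inj N). Qed.

Lemma card_r A : #|r A| = #|A|.
Proof. exact: card_imset (@ordS_inj N). Qed.

Lemma card_iter_r d A : #|iter d r A| = #|A|.
Proof. by elim: d => //= d IH; rewrite card_r. Qed.

Lemma iter_ordS d (j : 'I_N) : val (iter d (@ordS N) j) = (j + d) %% N.
Proof.
elim: d => [|d IH] /=; first by rewrite addn0 modn_small.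
by rewrite IH -addn1 modnDml addn1 addnS.
Qed.

Lemma iterN_ordS j : iter N (@ordS N) j = j.
Proof. by apply: val_inj; rewrite iter_ordS modnDr modn_small. Qed.

Lemma iter_r d A : iter d r A = [set iter d (@ordS N) x | x in A].
Proof.
elim: d => [|d IH] /=; first by rewrite imset_id.
by rewrite IH /r -imset_comp.
Qed.

Lemma iterN_r A : iter N r A = A.
Proof.
rewrite iter_r -[RHS]imset_id; apply: eq_imset => x; exact: iterN_ordS.
Qed.

Lemma iter_inj (T : Type) (f : T -> T) d : injective f -> injective (iter d f).
Proof. by move=> fi; elim: d => //= d IH x y /fi /IH. Qed.

Definition phi (A : S) := \sum_(j in A) val j.

Lemma phi_r A : phi (r A) = phi A + #|A| %[mod N].
Proof.
rewrite /phi /r big_imset /=; last by move=> x y _ _; apply: ordS_inj.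
rewrite modn_summ (eq_bigr (fun j : 'I_N => val j + 1)) ?big_split ?sum1_card //=.
by move=> j _; rewrite addn1.
Qed.

Lemma phi_iter d A : phi (iter d r A) = phi A + d * #|A| %[mod N].
Proof.
elim: d => [|d IH] /=; first by rewrite addn0.
rewrite phi_r -modnDml IH modnDml card_iter_r mulSn; by rewrite [#|A| + _]addnC addnA.
Qed.

Lemma coprimeN : coprime N m.+1.
Proof. by rewrite coprime_sym /coprime -addnn -addSn gcdnDl; apply: coprimeSn. Qed.

Lemma free (A : S) d : #|A| = m.+1 -> 0 < d < N -> iter d r A != A.
Proof.
move=> cA /andP[d0 dN]; apply/eqP => e.
have := phi_iter d A; rewrite e cA => /eqP.
rewrite -{1}[phi A]addn0 eqn_modDl mod0n eq_sym -/(dvdn N (d * m.+1)).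
rewrite Gauss_dvdl ?coprimeN // => /(dvdn_leq d0); lia.
Qed.

Definition orb (A : S) : {set S} := [set iter (val j) r A | j : 'I_N].

Lemma card_orb (A : S) : #|A| = m.+1 -> #|orb A| = N.
Proof.
move=> cA; rewrite /orb card_imset ?cardsT ?card_ord //.
have key : forall i j : 'I_N, i <= j -> iter i r A = iter j r A -> i = j.
  move=> i j le e; apply: val_inj => /=.
  have ej : val j = i + (j - i) by rewrite subnKC.
  move: e; rewrite ej iterD => /esym.
  move=> /(@iter_inj _ r i r_inj) e.
  case: (posnP (j - i)) => [h|h]; first lia.
  have := free cA (d := j - i); rewrite e /= eqxx; move/implyP; rewrite h /=.
  have := ltn_ord j; lia.
move=> i j e; case: (leqP i j) => le; first exact: key.
by apply/esym/key; [exact: ltnW|].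
Qed.

Lemma orb_self (A : S) : A \in orb A.
Proof. by apply/imsetP; exists ord0. Qed.

Definition inv (X : {set S}) := forall B, B \in X -> r B \in X.

Lemma orb_inv (A : S) : inv (orb A).
Proof.
move=> B /imsetP[j _ ->]; apply/imsetP.
case: (ltnP j.+1 N) => h.
  by exists (Ordinal h).
exists ord0 => //=.
have ej : nat_of_ord j = m.*2 by have := ltn_ord j; lia.
by rewrite ej -[RHS]iterN_r.
Qed.

Lemma orb_sub X (A : S) : inv X -> A \in X -> orb A \subset X.
Proof.
move=> iX AX; apply/subsetP => B /imsetP[j _ ->].
by elim: (val j) => //= d IH; apply: iX.
Qed.

Lemma orbD_inv X (A : S) : inv X -> inv (X :\: orb A).
Proof.
move=> iX B; rewrite !inE => /andP[nB BX]; rewrite iX // andbT.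
apply: contra nB => /imsetP[j _ e]; apply/imsetP.
case: j e => [[|j] jlt] /= e.
  exists (Ordinal (ltnSn m.*2)) => //=; apply: r_inj; rewrite e /=.
  by rewrite -[LHS]iterN_r.
have jlt' : j < N by lia.
by exists (Ordinal jlt') => //=; apply: r_inj.
Qed.

Lemma D_inv : inv D.
Proof. by move=> B; rewrite !inE card_r. Qed.

Lemma decomp X : inv X -> X \subset D -> exists c, #|X| = c * N /\
   forall t, t <= c -> exists Y, [/\ inv Y, Y \subset X & #|Y| = t * N].
Proof.
have [k] := ubnP #|X|; elim: k X => // k IH X ltX iX sXD.
case: (set_0Vmem X) => [->|[A AX]].
  exists 0; rewrite cards0; split => // t; rewrite leqn0 => /eqP ->.
  exists set0; split; [by move=> B; rewrite inE | by rewrite sub0set | by rewrite cards0].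
have cA : #|A| = m.+1 by have := subsetP sXD A AX; rewrite inE => /eqP.
have sO := orb_sub iX AX.
have cX' : #|X :\: orb A| = #|X| - N.
  by rewrite cardsD (setIidPr sO) card_orb.
have leO := subset_leq_card sO; rewrite card_orb // in leO.
have [c [cc Hc]] := IH (X :\: orb A) ltac:(lia) (orbD_inv (A := A) iX)
   (subset_trans (subsetDl _ _) sXD).
exists c.+1; split; first lia.
move=> t; rewrite leq_eqVlt => /orP[/eqP ->|]; last first.
  rewrite ltnS => /Hc [Y [iY sY cY]]; exists Y; split => //.
  exact: subset_trans sY (subsetDl _ _).
exists X; split => //; lia.
Qed.

Lemma r_img Y : inv Y -> r @: Y = Y.
Proof.
move=> iY; apply/eqP; rewrite eqEcard card_imset ?r_inj // ?leqnn ?andbT.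
by apply/subsetP => B /imsetP[A AY ->]; apply: iY.
exact: r_inj.
Qed.

Lemma deg_r (Y : {set S}) j : inv Y -> inF Y (@ordS N j) = inF Y j.
Proof.
move=> iY; rewrite /inF.
have -> : [set B in Y | ordS j \in B] = r @: [set A in Y | j \in A].
  apply/setP => B; rewrite inE; apply/idP/imsetP.
    move=> /andP[]; rewrite -{1}(r_img iY) => /imsetP[A AY ->] jA.
    exists A => //; rewrite inE AY /=.
    by move: jA; rewrite /r mem_imset //; apply: ordS_inj.
  move=> [A]; rewrite inE => /andP[AY jA] ->; rewrite iY //=.
  by apply/imsetP; exists j.
by rewrite card_imset //; apply: r_inj.
Qed.

Lemma deg_const (Y : {set S}) j : inv Y -> inF Y j = inF Y ord0.
Proof.
move=> iY.
have -> : j = iter j (@ordS N) ord0.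
  by apply: val_inj; rewrite iter_ordS add0n modn_small.
by elim: (val j) => //= d IH; rewrite deg_r.
Qed.

Lemma deg_sum (Y : {set S}) : Y \subset D -> \sum_(j : 'I_N) inF Y j = #|Y| * m.+1.
Proof.
move=> sYD.
have E : forall j, inF Y j = \sum_(A in Y) (j \in A : nat).
  move=> j; rewrite /inF -sum1_card big_mkcond /=.
  rewrite [RHS]big_mkcond /=; apply: eq_bigr => A _; rewrite !inE.
  by case: (A \in Y); case: (j \in A).
rewrite (eq_bigr _ (fun j _ => E j)) exchange_big /= -sum_nat_const; apply: eq_bigr => A AY.
have := subsetP sYD A AY; rewrite inE => /eqP <-.
rewrite -sum1_card [RHS]big_mkcond /=; apply: eq_bigr => j _.
by case: (j \in A).
Qed.

Lemma deg_val (Y : {set S}) j : inv Y -> Y \subset D -> N * inF Y j = #|Y| * m.+1.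
Proof.
move=> iY sYD; rewrite -deg_sum // (eq_bigr (fun _ => inF Y j)); last first.
  by move=> i _; rewrite (deg_const i iY) (deg_const j iY).
by rewrite sum_nat_const card_ord.
Qed.


Lemma in_U (F G : {set S}) j : [disjoint F & G] -> inF (F :|: G) j = inF F j + inF G j.
Proof.
move=> dFG; rewrite /inF -cardsUI.
have -> : [set A in F | j \in A] :&: [set A in G | j \in A] = set0.
  apply/setP => A; rewrite !inE.
  case AF: (A \in F); case AG: (A \in G); rewrite /= ?andbF //.
  by move/disjoint_setI0: dFG => /setP/(_ A); rewrite !inE AF AG.
by rewrite cards0 addn0; apply: eq_card => A; rewrite !inE andb_orl.
Qed.

Lemma out_U (F G : {set S}) j : [disjoint F & G] -> outF (F :|: G) j = outF F j + outF G j.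
Proof.
move=> dFG; rewrite /outF -cardsUI.
have -> : [set A in F | j \notin A] :&: [set A in G | j \notin A] = set0.
  apply/setP => A; rewrite !inE.
  case AF: (A \in F); case AG: (A \in G); rewrite /= ?andbF //.
  by move/disjoint_setI0: dFG => /setP/(_ A); rewrite !inE AF AG.
by rewrite cards0 addn0; apply: eq_card => A; rewrite !inE andb_orl.
Qed.

Lemma core : exists F : {set S},
  2 ^ N + 'C(N, m.+1) <= (#|F|).*2.+1 /\
  forall j, 'C(N, m.+1) + (inF F j).*2 <= (outF F j).*2.+1.
Proof.
have [c [cD Hc]] := decomp D_inv (subxx D).
set t := (c.+1)./2.
have [ht1 ht2] : c <= t.*2 /\ t.*2 <= c.+1 by rewrite /t; lia.
have [T [iT sTD cT]] := Hc t ltac:(lia).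
have dis : [disjoint B0 & T].
  rewrite -setI_eq0; apply/eqP/setP => A; rewrite !inE.
  apply/negbTE/negP => /andP[h1 h2]; have := subsetP sTD A h2; rewrite inE => /eqP h3.
  lia.
exists (B0 :|: T); rewrite -card_D cD.
have cU : #|B0 :|: T| = #|B0| + #|T|.
  by rewrite -cardsUI (disjoint_setI0 dis) cards0 addn0.
split.
  rewrite cU doubleD card_B0 cT; nia.
move=> j; rewrite in_U // out_U //.
have hT := deg_val j iT sTD.
have hD := deg_val j D_inv (subxx D).
have hB := outB0 j.
have hTo := in_out T j.
rewrite cT in hT hTo; rewrite cD in hD.
have eT : inF T j = t * m.+1.
  by apply/eqP; rewrite -(eqn_pmul2l (ltn0Sn m.*2)) hT; apply/eqP; lia.
have eD : inF D j = c * m.+1.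
  by apply/eqP; rewrite -(eqn_pmul2l (ltn0Sn m.*2)) hD; apply/eqP; lia.
nia.
Qed.

End Comb.

Local Open Scope ring_scope.

Definition gmap m (A : {set 'I_(m.*2.+1)}) : {ffun 'I_(m.*2.+2) -> bool} :=
  [ffun i => if unlift ord0 i is Some j then j \notin A else true].
Arguments gmap : clear implicits.

Lemma gmap_lift m A j : gmap m A (lift ord0 j) = (j \notin A).
Proof. by rewrite ffunE liftK. Qed.

Lemma gmap0 m A : gmap m A ord0 = true.
Proof. by rewrite ffunE unlift_none. Qed.

Lemma gmap_inj m : injective (gmap m).
Proof.
move=> A B e; apply/setP => j.
have := congr1 (fun s : {ffun 'I_(m.*2.+2) -> bool} => s (lift ord0 j)) e; rewrite /= !gmap_lift.
by apply: negb_inj.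
Qed.

Lemma V_img m : Vset (m.*2.+2) = gmap m @: setT.
Proof.
apply/setP => s; rewrite inE; apply/forallP/imsetP.
  move=> h; exists [set j | ~~ s (lift ord0 j)] => //.
  apply/ffunP => i; case: (unliftP ord0 i) => [j|] ->.
    by rewrite gmap_lift inE negbK.
  by rewrite gmap0; apply: (implyP (h ord0)).
move=> [A _ ->] i; apply/implyP => /eqP i0.
have -> : i = ord0 by apply: val_inj.
by rewrite gmap0.
Qed.

Lemma sum_cond_const (R : nzRingType) (T : finType) (F : {set T}) (P : pred T) (c : R) :
  \sum_(x in F | P x) c = c *+ #|[set x in F | P x]|.
Proof. by rewrite -sumr_const; apply: eq_bigl => x; rewrite !inE. Qed.

Lemma sum_sig (R : nzRingType) m (F : {set {set 'I_(m.*2.+1)}}) i :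
  \sum_(s in gmap m @: F) (if s i then 1 else -1 : R) =
  if unlift ord0 i is Some j then (outF F j)%:R - (inF F j)%:R else (#|F|)%:R.
Proof.
rewrite big_imset /=; last by move=> x y _ _; apply: gmap_inj.
case: (unliftP ord0 i) => [j|] ->; rewrite ?liftK ?unlift_none.
  rewrite (bigID (fun A : {set 'I_(m.*2.+1)} => j \in A)) /=.
  rewrite (eq_bigr (fun _ => -1)); last by move=> A /andP[_ h]; rewrite gmap_lift h.
  rewrite [X in _ + X](eq_bigr (fun _ => 1)); last by move=> A /andP[_ /negbTE h]; rewrite gmap_lift h.
  by rewrite !sum_cond_const mulNrn addrC.
rewrite (eq_bigr (fun _ => 1)); last by move=> A _; rewrite gmap0.
by rewrite sumr_const.
Qed.

Lemma card_V m : #|Vset (m.*2.+2)| = (2 ^ (m.*2.+1))%N.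
Proof. by rewrite V_img card_imset ?card_sets //; apply: gmap_inj. Qed.

Lemma sumV (R : nzRingType) m i :
  \sum_(s in Vset (m.*2.+2)) (if s i then 1 else -1 : R) =
  if unlift ord0 i is Some j then 0 else (2 ^ (m.*2.+1))%N%:R.
Proof.
rewrite V_img sum_sig; case: (unliftP ord0 i) => [j|] _.
  by rewrite in_out_all subrr.
by rewrite cardsT -card_sets cardsT.
Qed.

Lemma main_m (R : realFieldType) (m : nat) :
  exists w : 'I_(m.*2.+2) -> int,
    (forall i, w i <= 1) /\
    shiftedPV R (m.*2.+2) w 0 /\
    (forall y : 'rV[R]_(m.*2.+2), shiftedPV R (m.*2.+2) w y ->
        KM R (m.*2.+2) (Mbound R (m.*2.+2)) y).
Proof.
have [F [H0 Hj]] := core m.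
set C := 'C(m.*2.+1, m.+1) in H0 Hj.
have e2 : ((m.*2.+2) %/ 2 = m.+1)%N by rewrite -doubleS divn2 doubleK.
set w := fun i : 'I_(m.*2.+2) => if unlift ord0 i is Some j
   then (C + (inF F j).*2)%:Z - ((outF F j).*2)%:Z
   else (2 ^ (m.*2.+1) + C)%:Z - ((#|F|).*2)%:Z.
have hw : forall i, w i <= 1.
  move=> i; rewrite /w; case: (unliftP ord0 i) => [j|] _; cbv beta iota.
    by have := Hj j; lia.
  clear w; move: H0; rewrite /C; generalize ('C(m.*2.+1, m.+1)) (2 ^ (m.*2.+1))%N (#|F|) => c p f; lia.
exists w; split => //; split.
  exists (\sum_(s in gmap m @: F) signvec R (m.*2.+2) s); split.
    exists (gmap m @: F); split => //.
    by rewrite V_img; apply: imsetS; apply: subsetT.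
  apply/rowP => i; rewrite /gV /ones !mxE !summxE /= e2.
  have sg : forall X : {set {ffun 'I_(m.*2.+2) -> bool}},
      \sum_(k in X) signvec R (m.*2.+2) k 0 i = \sum_(k in X) (if k i then 1 else -1).
    by move=> X; apply: eq_bigr => k _; rewrite /signvec mxE.
  rewrite !sg sumV !sum_sig -/C /w.
  case: (unliftP ord0 i) => [j|] _; cbv beta iota.
    rewrite !intrB -!pmulrn !natrD -[(inF F j).*2]muln2 -[(outF F j).*2]muln2 !natrM.
    by field.
  rewrite !intrB -!pmulrn !natrD -[(#|F|).*2]muln2 !natrM.
  by field.
move=> y [x [[W' [sW' ->]] ->]] i.
rewrite /gV /ones /Mbound !mxE !summxE e2 -/C.
have sg : forall X : {set {ffun 'I_(m.*2.+2) -> bool}},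
    \sum_(k in X) signvec R (m.*2.+2) k 0 i = \sum_(k in X) (if k i then 1 else -1).
  by move=> X; apply: eq_bigr => k _; rewrite /signvec mxE.
rewrite !sg.
set X := \sum_(k in W') _.
set G := \sum_(k in Vset _) _.
set P := \sum_(k in Vset (m.*2.+2)) (if k i then 1 else 0 : R).
have hX : X <= P.
  apply: (@le_trans _ _ (\sum_(k in W') (if k i then 1 else 0 : R))).
    by apply: ler_sum => k _; case: (k i) => //; rewrite lerN10.
  rewrite /P [leRHS](big_setID W') /= (setIidPr sW') lerDl.
  by apply: sumr_ge0 => k _; case: (k i).
have hPG : P - 2^-1 * G = 2^-1 * (2 ^ (m.*2.+1))%N%:R.
  rewrite /P /G mulr_sumr -sumrB (eq_bigr (fun _ => 2^-1)).
    by rewrite sumr_const card_V mulr_natr.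
  by move=> k _; case: (k i); field.
have hw' : (w i)%:~R <= 1 :> R by rewrite -[1 : R](mulr1z) ler_int hw.
have e3 : (m.*2.+2 - 2 = m.*2)%N by lia.
rewrite e3; move: hPG; rewrite expnS natrM.
lra.
Qed.

Theorem lemma4p5 (R : realFieldType) (k : nat) (hk : (1 <= k)%N) :
  exists w : 'I_(2 ^ k) -> int,
    (forall i, w i <= 1) /\
    shiftedPV R (2 ^ k) w 0 /\
    (forall y : 'rV[R]_(2 ^ k), shiftedPV R (2 ^ k) w y -> KM R (2 ^ k) (Mbound R (2 ^ k)) y).
Proof.
have e : (2 ^ k = (2 ^ k.-1 - 1).*2.+2)%N.
  case: k hk => // k _ /=; rewrite expnS.
  have := expn_gt0 2 k; move: (2 ^ k)%N => p; lia.
rewrite e; exact: main_m.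
Qed.
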